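(* Let $M$ be a closed rooted combinatorial map with $|M|$ edges, let $N$ be a rooted map, and let $k,\ell$ be integers for which the operations below are defined. Then $$\mathrm{Ins}_{M,\ell}\big(R_k(N)\big)=R_k\big(\mathrm{Ins}_{M,\ell-2}(N)\big)\quad\text{if }k\le \ell-2,$$ $$\mathrm{Ins}_{M,\ell}\big(R_k(N)\big)=R_{k+2|M|}\big(\mathrm{Ins}_{M,\ell-1}(N)\big)\quad\text{if }1\le \ell-1\le k.$$
   Context: A rooted combinatorial map is $(H,\sigma,\alpha,r)$: $H$ a finite set of half-edges, $\sigma$ a permutation, $\alpha$ an involution, $r$ a fixed point of $\alpha$ (the root), with $\langle\sigma,\alpha\rangle$ transitive; vertices are $\sigma$-orbits, edges are $\alpha$-orbits (fixed points of $\alpha$ are dangling edges); it is closed if $r$ is the only fixed point of $\alpha$. The size is the number of edges (root included). Maps are drawn so that $\sigma$ gives the counterclockwise cyclic order of half-edges around each vertex; a corner is the angular sector between a half-edge $h$ and $\sigma(h)$; the root corner lies between $r$ and $\sigma(r)$, and the root edge is the edge containing $\sigma(r)$. A map of size $n$ has $2n-1$ corners (the one-half-edge map has one corner, its root corner). Bridge First Labeling (BFL): working on a copy of the map, label the root corner $1$. If the current corner has label $k$, let $e$ be the (possibly dangling) edge adjacent to this corner in the counterclockwise order. If $e$ is a bridge of the current map, go along $e$ to the next corner (at its other endpoint) and label it $k+1$; if $e$ is dangling, go to the following corner counterclockwise and label it $k+1$; otherwise cut $e$ into two dangling edges, go to the following corner counterclockwise and label it $k+1$. Stop upon reaching the root.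 For a map $N$ of size $n$ and $1\le k\le 2n-1$, $R_k(N)$ is obtained by adding a new edge linking the root corner of $N$ and the $k$-th corner of the BFL of $N$ (the new edge becomes the root edge). For a map $M'$, $\mathrm{Ins}_{M',k}(N)$ is obtained by inserting $M'$ at the $k$-th BFL corner of $N$ via a bridge: the root of $M'$ is attached in that corner, becoming a bridge; the root of the result is that of $N$. *)

(* Defs.v *)
From mathcomp Require Import all_boot.
Set Implicit Arguments. Unset Strict Implicit. Unset Printing Implicit Defensive.

Record rmap := RMap { hs : finType; sg : hs -> hs; al : hs -> hs; rt : hs }.
Arguments sg : clear implicits.
Arguments al : clear implicits.
Arguments rt : clear implicits.

Definition gen_rel (T : finType) (s a : T -> T) : rel T :=
  fun u v => (v == s u) || (v == a u).

Definition rooted_map (G : rmap) : Prop :=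
  [/\ injective (sg G),
      involutive (al G),
      al G (rt G) = rt G &
      forall x y, connect (gen_rel (sg G) (al G)) x y ]. (* transitivity *)

Definition closed_map (G : rmap) : Prop :=
  rooted_map G /\ forall h, al G h = h -> h = rt G.

(* size = number of edges = number of alpha-orbits *)
Definition msize (G : rmap) : nat := fcard (al G) (@predT (hs G)).

Definition iso (G1 G2 : rmap) : Prop :=
  exists f : hs G1 -> hs G2,
    [/\ bijective f,
        forall h, f (sg G1 h) = sg G2 (f h),
        forall h, f (al G1 h) = al G2 (f h) &
        f (rt G1) = rt G2].

(* Corners are identified with half-edges: corner h lies between h and sigma h.
   The current copy of the map keeps sigma and has a current alpha [a]. *)

(* cut the edge {h, a h} into two dangling edges *)
Definition cut (T : finType) (a : T -> T) (h : T) : T -> T :=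
  fun x => if (x == h) || (x == a h) then x else a x.

Definition is_bridge (G : rmap) (a : hs G -> hs G) (h : hs G) : bool :=
  (a h != h) && ~~ connect (gen_rel (sg G) (cut a h)) h (a h).

(* one BFL step from the current corner h with current alpha a; the edge
   adjacent to corner h in ccw order is the one containing sigma h.
   - bridge: go along it, arriving at corner a (sigma h);
   - dangling: go to the following corner sigma h (= a (sigma h));
   - otherwise: cut it, then go to the following corner sigma h. *)
Definition bfl_step (G : rmap) (st : (hs G -> hs G) * hs G)
  : (hs G -> hs G) * hs G :=
  let: (a, h) := st in
  let h' := sg G h in
  let a' := if (a h' == h') || is_bridge a h' then a else cut a h' in
  (a', a' h').

Fixpoint bfl_iter (G : rmap) (n : nat) (st : (hs G -> hs G) * hs G)
  : seq (hs G) :=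
  if n is n'.+1 then let st' := bfl_step st in st'.2 :: bfl_iter n' st'
  else [::].

(* the BFL: the sequence of labelled corners (label i = position i-1),
   starting at the root corner and stopping upon reaching the root again *)
Definition bfl (G : rmap) : seq (hs G) :=
  let tl := bfl_iter #|hs G| (al G, rt G) in
  rt G :: take (index (rt G) tl) tl.

(* the k-th corner of the BFL (1-based) *)
Definition corner (G : rmap) (k : nat) : hs G := nth (rt G) (bfl G) k.-1.

Definition corner_ok (G : rmap) (k : nat) : bool := (0 < k <= size (bfl G)).

(* New half-edges: None (= a, placed in the root corner, right after the root)
   and Some None (= b, placed in the k-th corner c).  When c is the root
   corner, the cyclic order there is r, a, b, sigma r; the new edge {a,b}
   is the root edge (it contains sigma' r = a). *)
Definition R_sg (G : rmap) (c : hs G) (x : option (option (hs G)))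
  : option (option (hs G)) :=
  match x with
  | None => if c == rt G then Some None else Some (Some (sg G (rt G)))
  | Some None => Some (Some (sg G c))
  | Some (Some h) =>
      if h == rt G then None
      else if h == c then Some None else Some (Some (sg G h))
  end.

Definition R_al (G : rmap) (x : option (option (hs G)))
  : option (option (hs G)) :=
  match x with
  | None => Some None
  | Some None => None
  | Some (Some h) => Some (Some (al G h))
  end.

Definition R_ (k : nat) (G : rmap) : rmap :=
  @RMap (option (option (hs G))) (R_sg (corner G k)) (@R_al G)
        (Some (Some (rt G))).

(* New half-edge None placed in the l-th corner c of N, paired by alpha with
   the root of M (which thus becomes a bridge); the root is that of N. *)
Definition Ins_sg (M N : rmap) (c : hs N) (x : option (hs N + hs M))
  : option (hs N + hs M) :=
  match x with
  | None => Some (inl (sg N c))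
  | Some (inl h) => if h == c then None else Some (inl (sg N h))
  | Some (inr h) => Some (inr (sg M h))
  end.

Definition Ins_al (M N : rmap) (x : option (hs N + hs M))
  : option (hs N + hs M) :=
  match x with
  | None => Some (inr (rt M))
  | Some (inl h) => Some (inl (al N h))
  | Some (inr h) => if h == rt M then None else Some (inr (al M h))
  end.

Definition Ins (M : rmap) (l : nat) (N : rmap) : rmap :=
  @RMap (option (hs N + hs M)) (Ins_sg (corner N l)) (@Ins_al M N)
        (Some (inl (rt N))).

(* Main.v *)
Require Import Defs.
From mathcomp Require Import all_boot zify.
From Stdlib Require Import FunctionalExtensionality.
Set Implicit Arguments. Unset Strict Implicit. Unset Printing Implicit Defensive.

Lemma connect_hom (T1 T2 : finType) (e1 : rel T1) (e2 : rel T2) (f : T1 -> T2) :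
  (forall x y, e1 x y -> connect e2 (f x) (f y)) ->
  forall x y, connect e1 x y -> connect e2 (f x) (f y).
Proof.
move=> H x _ /connectP[p pth ->]; elim: p x pth => [|z p IH] x /=.
  by rewrite connect0.
by case/andP=> exz pz; apply: connect_trans (H _ _ exz) (IH _ pz).
Qed.

Lemma connect_inv (T : finType) (e : rel T) (P : pred T) x y :
  P x -> (forall u v, P u -> e u v -> P v) -> connect e x y -> P y.
Proof.
move=> Px H /connectP[p pth ->]; elim: p x Px pth => [|z p IH] x Px //=.
by case/andP=> exz pz; apply: IH pz; apply: H exz.
Qed.

Lemma connect_revI (T : finType) (e : rel T) :
  (forall x y, e x y -> connect e y x) -> forall u v, connect e u v -> connect e v u.
Proof.
move=> H u _ /connectP[p pth ->]; elim: p u pth => [|z p IH] u /=.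
  by rewrite connect0.
by case/andP=> euz pz; apply: connect_trans (IH _ pz) (H _ _ euz).
Qed.

Section Gen.
Variable T : finType.
Variable s : T -> T.
Hypothesis s_inj : injective s.

Lemma gen_connect_sym (b : T -> T) : involutive b ->
  forall u v, connect (gen_rel s b) u v -> connect (gen_rel s b) v u.
Proof.
move=> binv; apply: connect_revI => x y /orP[] /eqP->.
  have : fconnect s (s x) x by rewrite fconnect_sym // fconnect1.
  apply: connect_sub => u v /eqP<-; apply: connect1; by rewrite /gen_rel eqxx.
by apply: connect1; rewrite /gen_rel binv eqxx orbT.
Qed.

Lemma cut_inv (a : T -> T) h : involutive a -> involutive (cut a h).
Proof.
move=> ainv x; rewrite /cut.
case E: ((x == h) || (x == a h)); first by rewrite E.
case/norP: E => xh xah.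
have -> : (a x == h) || (a x == a h) = false.
  apply/norP; split; apply/negP => /eqP E.
    by move/negP: xah; apply; rewrite -E ainv.
  by move/negP: xh; apply; apply/eqP; apply: (can_inj ainv).
by rewrite ainv.
Qed.

Lemma cut_fix (a : T -> T) h x : a x = x -> cut a h x = x.
Proof. by rewrite /cut => ->; case: ifP. Qed.

Lemma cut_sym (a : T -> T) h : involutive a -> cut a (a h) =1 cut a h.
Proof. by move=> ainv x; rewrite /cut ainv orbC. Qed.

End Gen.

Definition stepcore (G : rmap) (a : hs G -> hs G) (h' : hs G) :=
  let a' := if (a h' == h') || is_bridge a h' then a else cut a h' in (a', a' h').

Lemma bfl_stepE (G : rmap) a h : bfl_step (G:=G) (a, h) = stepcore a (sg G h).
Proof. by []. Qed.

Definition stn (G : rmap) n := iter n (@bfl_step G) (al G, rt G).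
Arguments stn : clear implicits.
Definition pos (G : rmap) n := (stn G n).2.
Definition alp (G : rmap) n := (stn G n).1.
Arguments stn : clear implicits.
Arguments pos : clear implicits.
Arguments alp : clear implicits.

Lemma stnS (G : rmap) n : stn G n.+1 = stepcore (alp G n) (sg G (pos G n)).
Proof. rewrite /alp /pos /stn iterS. by case: (iter n _ _). Qed.

Lemma bfl_iterE (G : rmap) n st :
  bfl_iter n st = [seq (iter i.+1 (@bfl_step G) st).2 | i <- iota 0 n].
Proof.
elim: n st => [//|n IH] st /=; rewrite IH; congr (_ :: _).
rewrite -(addn0 1) iotaDl -map_comp; apply: eq_map => i /=.
by rewrite add0n -iterSr iterS.
Qed.

Lemma corner_pos (G : rmap) k : corner_ok G k -> corner G k = pos G k.-1.
Proof.
case/andP; rewrite /corner /bfl bfl_iterE /pos /stn.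
case: k => [//|[_ _ //|k]] /=.
set tl := map _ _ => _ Hk.
have [Hi Hs] : k < index (rt G) tl /\ k < size tl.
  move: Hk; rewrite ltnS size_take; case: ifP => [H1 H2|H1 H2]; split => //.
    exact: ltn_trans H2 H1.
  by move/negbT: H1; rewrite -leqNgt => /(leq_trans H2).
rewrite nth_take // (nth_map 0); last by move: Hs; rewrite size_map.
by rewrite nth_iota ?add0n //; move: Hs; rewrite size_map size_iota.
Qed.

Lemma size_bfl_le (G : rmap) : size (bfl G) <= #|hs G|.+1.
Proof.
rewrite /bfl /= ltnS.
apply: leq_trans (_ : _ <= size (bfl_iter #|hs G| (al G, rt G))) _.
  by rewrite size_take; case: ifP => // /ltnW.
by rewrite bfl_iterE size_map size_iota.
Qed.

Section BFL.
Variable G : rmap.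
Local Notation T := (hs G).
Local Notation s := (sg G).
Local Notation r := (rt G).
Hypothesis s_inj : injective s.
Hypothesis al_inv : involutive (al G).
Hypothesis al_r : al G r = r.

Local Notation pos := (pos G).
Local Notation alp := (alp G).

Lemma alpS n : alp n.+1 =
  if (alp n (s (pos n)) == s (pos n)) || is_bridge (alp n) (s (pos n))
  then alp n else cut (alp n) (s (pos n)).
Proof. by rewrite /alp stnS. Qed.

Lemma posS n : pos n.+1 = alp n.+1 (s (pos n)).
Proof. by rewrite /pos /alp stnS. Qed.

Lemma alp_inv n : involutive (alp n).
Proof.
elim: n => [|n IH]; first exact: al_inv.
by rewrite alpS; case: ifP => _ //; apply: cut_inv.
Qed.

Lemma alp_r n : alp n r = r.
Proof.
elim: n => [|n IH]; first exact: al_r.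
by rewrite alpS; case: ifP => _ //; apply: cut_fix.
Qed.

Lemma bridge_cut (a : T -> T) h y : involutive a -> is_bridge a y ->
  y != h -> y != a h -> is_bridge (cut a h) y.
Proof.
move=> ainv /andP[ayy nc] yh yah.
have cy : cut a h y = a y by rewrite /cut (negbTE yh) (negbTE yah).
rewrite /is_bridge cy ayy /=; apply: contra nc.
apply: connect_sub => u v /orP[] /eqP ->; first by apply: connect1; rewrite /gen_rel eqxx.
rewrite [cut (cut a h) y u]/cut cy.
case: ifP => [_|/norP[uy uay]]; first exact: connect0.
rewrite [cut a h u]/cut; case: ifP => [_|/norP[uh uah]]; first exact: connect0.
by apply: connect1; rewrite /gen_rel /cut (negbTE uy) (negbTE uay) eqxx orbT.
Qed.

Lemma bridge_sym (a : T -> T) h : involutive a -> is_bridge a (a h) = is_bridge a h.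
Proof.
move=> ainv; rewrite /is_bridge ainv eq_sym; congr (_ && ~~ _).
rewrite (eq_connect (e' := gen_rel s (cut a h))); last first.
  by move=> u v; rewrite /gen_rel cut_sym.
apply/idP/idP; apply: gen_connect_sym => //; exact: cut_inv.
Qed.

Definition good n := forall j, j < n ->
  alp n (s (pos j)) = pos j.+1 /\
  ((alp n (s (pos j)) == s (pos j)) || is_bridge (alp n) (s (pos j))).

Definition noret n := forall i, 0 < i <= n -> pos i != r.

Lemma pos_iter n : good n -> forall j, j <= n ->
  pos j = iter j (fun x => alp n (s x)) r.
Proof.
move=> gn; elim=> [//|j IH] Hj.
by rewrite iterS -IH ?(ltnW Hj) //; case: (gn j Hj).
Qed.

Lemma iter_diff (f : T -> T) (finj : injective f) x i j :
  i <= j -> iter i f x = iter j f x -> iter (j - i) f x = x.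
Proof.
elim: i j => [|i IH] [|j] //.
by rewrite ltnS subSS /= => Hij /finj; apply: IH.
Qed.

Lemma pos_uniq n : good n -> noret n -> forall i j, i <= n -> j <= n ->
  pos i = pos j -> i = j.
Proof.
move=> gn nr.
have phinj : injective (fun x => alp n (s x)).
  by move=> u v /(can_inj (alp_inv n))/s_inj.
suff H : forall i j, i < j -> j <= n -> pos i = pos j -> False.
  move=> i j Hi Hj E; case: (ltngtP i j) => // [ij|ji]; first by case: (H _ _ ij Hj E).
  by case: (H _ _ ji Hi (esym E)).
move=> i j ij Hj E.
have := iter_diff phinj (x:=r) (ltnW ij).
rewrite -(pos_iter gn (leq_trans (ltnW ij) Hj)) -(pos_iter gn Hj) => /(_ E).
rewrite -(pos_iter gn (leq_trans (leq_subr _ _) Hj)) => /eqP.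
by apply/negP/nr; rewrite subn_gt0 ij (leq_trans (leq_subr _ _) Hj).
Qed.

Lemma good_step n : good n -> noret n -> good n.+1.
Proof.
move=> gn nr j; rewrite ltnS leq_eqVlt => /orP[/eqP->|jn].
  split; first by rewrite posS.
  rewrite alpS; case E: ((alp n (s (pos n)) == s (pos n)) || is_bridge (alp n) (s (pos n))) => /=.
    by rewrite E.
  by apply/orP; left; rewrite /cut eqxx /=.
have [E1 E2] := gn j jn.
rewrite alpS; case: ifP => [_|/norP[nfix nbr]]; first by split.
set h' := s (pos n) in nfix nbr *; set a := alp n in E1 E2 nfix nbr *.
have ainv : involutive a by apply: alp_inv.
have yh : s (pos j) != h'.
  apply/negP=> /eqP/s_inj /(pos_uniq gn nr (ltnW jn) (leqnn n)) E.
  by rewrite E ltnn in jn.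
have yah : s (pos j) != a h'.
  apply/negP=> /eqP E; move: E2; rewrite E ainv.
  case/orP=> [/eqP E3|]; first by rewrite -E3 eqxx in nfix.
  by rewrite bridge_sym // (negbTE nbr).
have cy : cut a h' (s (pos j)) = a (s (pos j)) by rewrite /cut (negbTE yh) (negbTE yah).
rewrite cy; split=> //.
case/orP: E2 => [-> //|br]; apply/orP; right; exact: bridge_cut.
Qed.

Lemma good0 : good 0. Proof. by []. Qed.

Lemma good_all n : noret n -> good n.+1.
Proof.
elim: n => [|n IH] nr; first by apply: good_step good0 nr.
have nr' : noret n by move=> i /andP[i0 inn]; apply: nr; rewrite i0 (leq_trans inn).
by apply: good_step (IH nr') nr.
Qed.

Lemma good_all' n : noret n -> good n.
Proof.
case: n => [|n] nr; first exact: good0.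
apply: good_all => i /andP[i0 inn]; apply: nr; rewrite i0 (leq_trans inn) //.
Qed.

Lemma face_bridge (a : T -> T) x : involutive a -> is_bridge a x ->
  fconnect (fun z => a (s z)) (a x) x.
Proof.
move=> ainv /andP[axx nc].
set phi := fun z => a (s z).
have phi_inj : injective phi by move=> u v; rewrite /phi => /(can_inj ainv); apply: s_inj.
set a' := cut a x.
have a'inv : involutive a' by apply: cut_inv.
set C := fun z => connect (gen_rel s a') (a x) z.
have nCx : ~~ C x.
  by apply/negP => /(gen_connect_sym s_inj a'inv) H; rewrite H in nc.
have zdef : fconnect phi (a x) (finv phi (a x)) by apply: fconnect_finv.
set z := finv phi (a x) in zdef.
have phz : phi z = a x by apply: f_finv.
set n := findex phi (a x) z.
have itn : iter n phi (a x) = z by apply: iter_findex.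
have key : forall i, i <= n ->
   (exists2 i', i' <= i & iter i' phi (a x) = x) \/ C (iter i phi (a x)).
  elim=> [|i IH] Hi; first by right; apply: connect0.
  case: (IH (ltnW Hi)) => [[i' Hi' E]|Cw].
    by left; exists i' => //; apply: leqW.
  set w := iter i phi (a x) in Cw *.
  have [swx|swx] := eqVneq (s w) x.
    exfalso; move/negP: nCx; apply; apply: connect_trans Cw (connect1 _).
    by rewrite /gen_rel swx eqxx.
  have [swax|swax] := eqVneq (s w) (a x).
    by left; exists i.+1 => //; rewrite iterS -/w /phi swax ainv.
  right; rewrite iterS -/w; apply: connect_trans Cw _.
  apply: (connect_trans (connect1 (_ : gen_rel s a' w (s w)))); first by rewrite /gen_rel eqxx.
  apply: connect1.
  by rewrite /gen_rel /phi /a' /cut (negbTE swx) (negbTE swax) eqxx orbT.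
case: (key n (leqnn n)) => [[i' _ E]|Cz].
  by rewrite -[X in fconnect _ _ X]E; apply: fconnect_iter.
exfalso; move/negP: nCx; apply.
have szx : s z = x by apply: (can_inj ainv); rewrite -phz.
rewrite itn in Cz; apply: connect_trans Cz (connect1 _).
by rewrite /gen_rel szx eqxx.
Qed.

Hypothesis conn : forall x y, connect (gen_rel s (al G)) x y.

Lemma alp_conn n : forall x y, connect (gen_rel s (alp n)) x y.
Proof.
elim: n => [|n IH]; first exact: conn.
rewrite alpS; case: ifP => [_ //|/norP[nfix nbr]].
set h' := s (pos n) in nfix nbr *; set a := alp n in IH nfix nbr *.
have ainv : involutive a by apply: alp_inv.
have ch : connect (gen_rel s (cut a h')) h' (a h').
  by move: nbr; rewrite /is_bridge nfix /= negbK.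
move=> x y; apply: connect_sub (IH x y) => u v /orP[] /eqP ->.
  by apply: connect1; rewrite /gen_rel eqxx.
have [->|uh] := eqVneq u h'; first exact: ch.
have [->|uah] := eqVneq u (a h').
  by rewrite ainv; apply: (gen_connect_sym s_inj (cut_inv _ ainv)) ch.
by apply: connect1; rewrite /gen_rel /cut (negbTE uh) (negbTE uah) eqxx orbT.
Qed.

Lemma ret_exists : exists m, (0 < m <= #|T|) && (pos m == r).
Proof.
case: (boolP [exists i : 'I_#|T|.+1, (0 < i) && (pos i == r)]) => [/existsP [i Hi]|nall].
  exists i; case/andP: Hi => H1 H2; by rewrite H1 H2 /= andbT -ltnS ltn_ord.
exfalso.
have nr : noret #|T|.
  move=> i /andP[i0 iT]; apply/negP => E; move/negP: nall; apply.
  have iT' : i < #|T|.+1 by rewrite ltnS.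
  by apply/existsP; exists (Ordinal iT'); rewrite /= i0 E.
have U : uniq [seq pos i | i <- iota 0 #|T|.+1].
  rewrite map_inj_in_uniq ?iota_uniq // => i j.
  rewrite !mem_iota !add0n /= !ltnS => Hi Hj; exact: pos_uniq (good_all' nr) nr i j Hi Hj.
have := card_uniqP U; rewrite size_map size_iota => E.
have := max_card (mem [seq pos i | i <- iota 0 #|T|.+1]).
by rewrite E ltnn.
Qed.

Lemma visit_all : pos #|T| = r /\ noret #|T|.-1.
Proof.
case: (ex_minnP ret_exists) => m /andP[/andP[m0 mT] /eqP pm] mmin.
have nr : noret m.-1.
  move=> i /andP[i0 im]; apply/negP => /eqP E.
  have im' : i < m by rewrite -(prednK m0) ltnS.
  have := mmin i; rewrite i0 E eqxx (leq_trans (ltnW im') mT) /= => /(_ isT).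
  by rewrite leqNgt im'.
have gm : good m by rewrite -(prednK m0); apply: good_all.
set S := [seq pos i | i <- iota 0 m].
set a := alp m.
have inS : forall j, j < m -> pos j \in S.
  by move=> j jm; apply: map_f; rewrite mem_iota add0n.
have S_inv : forall x, x \in S -> exists2 j, j < m & x = pos j.
  move=> x /mapP[j]; rewrite mem_iota add0n => jm ->; by exists j.
have phiS : forall x, x \in S -> a (s x) \in S.
  move=> x /S_inv[j jm ->]; have [E1 _] := gm j jm; rewrite /a E1.
  have [jm'|] := ltnP j.+1 m; first exact: inS.
  move=> H; have jE : j.+1 = m by apply/eqP; rewrite eqn_leq jm H.
  by rewrite jE pm; apply: (inS 0).
have iterS' : forall n x, x \in S -> iter n (fun z => a (s z)) x \in S.
  by elim=> [//|n IH] x xS; rewrite iterS; apply: phiS; apply: IH.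
have sS : forall x, x \in S -> s x \in S.
  move=> x xS; have [j jm xE] := S_inv x xS; have [E1 E2] := gm j jm.
  rewrite -/a in E1 E2; rewrite xE.
  case/orP: E2 => [/eqP E|br]; first by rewrite -E -xE; apply: phiS.
  have fc := face_bridge (alp_inv m) br.
  rewrite -(iter_findex fc); apply: iterS'; rewrite -xE; exact: phiS.
have aS : forall x, x \in S -> a x \in S.
  move=> x /S_inv[[|j] jm ->]; first by rewrite /a alp_r; apply: (inS 0).
  have [E1 _] := gm j (ltnW jm); rewrite -E1 /a alp_inv; apply: sS; apply: inS; exact: ltnW.
have allS : forall v, v \in S.
  move=> v; apply: (connect_inv (P := mem S) (x := r)) (alp_conn m r v).
    by apply: (inS 0).
  by move=> u w uS /orP[] /eqP->; [apply: sS | apply: aS].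
have Tm : #|T| <= m.
  have : #|T| <= #|S| by apply: subset_leq_card; apply/subsetP => x _; apply: allS.
  by move/leq_trans; apply; rewrite (leq_trans (card_size S)) // size_map size_iota.
have mE : m = #|T| by apply/eqP; rewrite eqn_leq mT Tm.
by rewrite -mE.
Qed.

Lemma card_pos : 0 < #|T|.
Proof. by apply/card_gt0P; exists r. Qed.

Lemma pos_card : pos #|T| = r.
Proof. by case: visit_all. Qed.

Lemma pos_nr i : 0 < i -> i < #|T| -> pos i != r.
Proof.
move=> i0 iT; case: visit_all => _; apply; rewrite i0 /= -ltnS prednK //; exact: card_pos.
Qed.

Lemma pos_inj i j : i < #|T| -> j < #|T| -> pos i = pos j -> i = j.
Proof.
have [_ nr] := visit_all.
move=> Hi Hj; apply: (pos_uniq (good_all' nr) nr);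
  by rewrite -ltnS prednK //; apply: card_pos.
Qed.

Lemma size_bfl : size (bfl G) = #|T|.
Proof.
rewrite /bfl bfl_iterE -/(stn G _) /=.
have tlE : [seq (iter i.+1 (bfl_step (G:=G)) (al G, r)).2 | i <- iota 0 #|T|] =
   rcons [seq pos i.+1 | i <- iota 0 #|T|.-1] r.
  set n := #|T|.-1; have nE : #|T| = n.+1 := esym (prednK card_pos).
  rewrite -cats1 nE -addn1 iotaD map_cat add0n /=; congr (_ ++ [:: _]).
  change (pos n.+1 = r); by rewrite -nE pos_card.
rewrite tlE -cats1 index_cat.
have -> : (r \in [seq pos i.+1 | i <- iota 0 #|T|.-1]) = false.
  apply/negP => /mapP[i]; rewrite mem_iota add0n => Hi E.
  have Hi' : i.+1 < #|T| by rewrite -(prednK card_pos) ltnS.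
  by have := pos_nr (i:=i.+1) isT Hi'; rewrite -E eqxx.
rewrite /= eqxx addn0 take_size_cat ?size_map ?size_iota //.
by rewrite prednK //; apply: card_pos.
Qed.

Lemma corner_okE k : corner_ok G k = (0 < k <= #|T|).
Proof. by rewrite /corner_ok size_bfl. Qed.

End BFL.

Definition liftR (T : Type) (a : T -> T) (x : option (option T)) : option (option T) :=
  if x is Some (Some h) then Some (Some (a h)) else x.

Section RSim.
Variable N : rmap.
Variable k : nat.
Hypothesis Nr : rooted_map N.
Hypothesis kok : corner_ok N k.

Local Notation T := (hs N).
Local Notation s := (sg N).
Local Notation r := (rt N).
Local Notation c := (corner N k).
Local Notation RG := (R_ k N).

Definition liftRS (st : (T -> T) * T) : (hs RG -> hs RG) * hs RG :=
  (liftR st.1, Some (Some st.2)).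

Lemma connect_R (b : T -> T) u v :
  connect (gen_rel (R_sg c) (liftR b)) (Some (Some u)) (Some (Some v)) =
  connect (gen_rel s b) u v.
Proof.
apply/idP/idP.
  pose f (x : hs RG) := match x with None => r | Some None => c | Some (Some u) => u end.
  move/(connect_hom (f := f)); apply => x y /orP[] /eqP ->.
  - case: x => [[h|]|] /=.
    + case: ifP => [/eqP->|_]; first exact: connect0.
      case: ifP => [/eqP->|_]; first exact: connect0.
      by apply: connect1; rewrite /gen_rel eqxx.
    + by apply: connect1; rewrite /gen_rel eqxx.
    + case: ifP => [/eqP E|_]; first by rewrite /f /= E; apply: connect0.
      by apply: connect1; rewrite /gen_rel eqxx.
  - case: x => [[h|]|] /=; try exact: connect0.
    by apply: connect1; rewrite /gen_rel eqxx orbT.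
move/(connect_hom (f := fun u : T => (Some (Some u) : hs RG))); apply => x y /orP[] /eqP ->.
  have [xr|xr] := eqVneq x r.
    apply: (connect_trans (connect1 (_ : gen_rel (R_sg c) (liftR b) _ None))).
      by rewrite /gen_rel /= xr eqxx.
    have [cr|cr] := eqVneq c r.
      apply: (connect_trans (connect1 (_ : gen_rel (R_sg c) (liftR b) _ (Some None)))).
        by rewrite /gen_rel /= cr eqxx.
      by apply: connect1; rewrite /gen_rel /= cr xr eqxx.
    by apply: connect1; rewrite /gen_rel /= (negbTE cr) xr eqxx.
  have [xc|xc] := eqVneq x c.
    apply: (connect_trans (connect1 (_ : gen_rel (R_sg c) (liftR b) _ (Some None)))).
      by rewrite /gen_rel /= (negbTE xr) xc eqxx.
    by apply: connect1; rewrite /gen_rel /= xc eqxx.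
  by apply: connect1; rewrite /gen_rel /= (negbTE xr) (negbTE xc) eqxx.
by apply: connect1; rewrite /gen_rel /= eqxx orbT.
Qed.

Lemma cut_liftR (a : T -> T) h : cut (liftR a) (Some (Some h)) = liftR (cut a h).
Proof.
apply: functional_extensionality => -[[x|]|] //=; rewrite /cut /=.
by case: ifP => _.
Qed.

Lemma R_core (a : T -> T) h' :
  stepcore (G:=RG) (liftR a) (Some (Some h')) = liftRS (stepcore (G:=N) a h').
Proof.
rewrite /stepcore /liftRS /=.
have E1 : (Some (Some (a h')) == Some (Some h') :> hs RG) = (a h' == h') by [].
have E2 : is_bridge (G:=RG) (liftR a) (Some (Some h')) = is_bridge (G:=N) a h'.
  by rewrite /is_bridge /= cut_liftR connect_R.
rewrite E1 E2; case: ifP => _ //; by rewrite cut_liftR.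
Qed.


Let Ninj : injective s. Proof. by case: Nr. Qed.
Let Ninv : involutive (al N). Proof. by case: Nr. Qed.
Let Nal : al N r = r. Proof. by case: Nr. Qed.
Let Nconn : forall x y, connect (gen_rel s (al N)) x y. Proof. by case: Nr. Qed.

Let k0 : 0 < k. Proof. by case/andP: kok. Qed.
Let kT : k <= #|T|. Proof. by move: kok; rewrite corner_okE // => /andP[]. Qed.
Let cE : c = pos N k.-1. Proof. exact: corner_pos. Qed.
Let kT' : k.-1 < #|T|. Proof. by rewrite prednK. Qed.

Lemma cut_Ral : cut (R_al (G:=N)) None = liftR (al N).
Proof. by apply: functional_extensionality => -[[x|]|]. Qed.

Lemma R_st1 : stn RG 1 = (liftR (al N), None).
Proof.
rewrite stnS /= eqxx /stepcore /=.
have -> : is_bridge (G:=RG) (R_al (G:=N)) None = false.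
  rewrite /is_bridge /= cut_Ral; apply/negbTE; rewrite negbK.
  have [cr|cr] := eqVneq c r.
    by apply: connect1; rewrite /gen_rel /= cr eqxx.
  apply: (connect_trans (connect1 (_ : gen_rel (R_sg c) (liftR (al N)) None (Some (Some (s r)))))).
    by rewrite /gen_rel /= (negbTE cr) eqxx.
  apply: (connect_trans (y := Some (Some c))); first by rewrite connect_R.
  by apply: connect1; rewrite /gen_rel /= (negbTE cr) eqxx.
by rewrite cut_Ral.
Qed.

Lemma stN1 : stn N 1 = stepcore (al N) (s r).
Proof. by []. Qed.

Lemma R_pre d : d.+1 <= k.-1 -> stn RG d.+2 = liftRS (stn N d.+1).
Proof.
elim: d => [|d IH] Hd.
  have cr : c != r by rewrite cE; apply: pos_nr => //; apply: leq_trans kT'.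
  rewrite stnS /pos /alp R_st1 /= (negbTE cr) R_core.
  by [].
rewrite [stn N _]stnS stnS /pos /alp IH ?(ltnW Hd) //.
have pr : pos N d.+1 != r by apply: pos_nr => //; apply: leq_trans Hd _; apply: ltnW.
have pc : pos N d.+1 != c.
  rewrite cE; apply/eqP => /pos_inj; move=> /(_ Ninj Ninv Nal Nconn).
  by move=> H; have := H (ltn_trans Hd kT') kT' ; move=> E; rewrite E ltnn in Hd.
rewrite /liftRS /=; rewrite -/(pos N d.+1) -/(alp N d.+1) (negbTE pr) (negbTE pc) R_core.  done.
Qed.


Lemma R_pre' n : 0 < n <= k.-1 -> stn RG n.+1 = liftRS (stn N n).
Proof. by case: n => // n /andP[_ H]; apply: R_pre. Qed.

Lemma R_b : stn RG k.+1 = (liftR (alp N k.-1), Some None).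
Proof.
have [k1|k1] := eqVneq k 1.
  have cr : c == r by rewrite cE k1.
  have -> : k.+1 = 2 by rewrite k1.
  rewrite stnS /alp /pos R_st1 /= cr /stepcore /=.
  by rewrite k1.
have k2 : 1 < k by rewrite ltn_neqAle eq_sym k1 k0.
have E : stn RG k = liftRS (stn N k.-1).
  rewrite -[X in stn _ X](prednK k0); apply: R_pre'.
  by rewrite leqnn andbT -ltnS prednK.
have cr : c != r by rewrite cE; apply: pos_nr => //; rewrite -ltnS prednK.
rewrite stnS /alp /pos E /liftRS /=; rewrite -/(pos N k.-1) -cE (negbTE cr) eqxx /stepcore /=.
by [].
Qed.

Lemma R_post d : k + d < #|T| -> stn RG (k + d).+2 = liftRS (stn N (k + d)).
Proof.
elim: d => [|d IH] Hd.
  rewrite addn0 stnS /alp /pos R_b /= R_core.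
  by rewrite -[X in stn N X](prednK k0) stnS -cE.
have Hd' : k + d < #|T| by apply: ltn_trans Hd; rewrite addnS.
rewrite addnS stnS /alp /pos IH //.
have pr : pos N (k + d) != r.
  by apply: pos_nr => //; rewrite (leq_trans k0) // leq_addr.
have pc : pos N (k + d) != c.
  rewrite cE; apply/eqP => /pos_inj; move=> /(_ Ninj Ninv Nal Nconn Hd' kT') E.
  by move: (leq_addr d k); rewrite E -ltnS prednK // ltnn.
rewrite /liftRS /=; rewrite -/(pos N (k + d)) -/(alp N (k + d)) (negbTE pr) (negbTE pc) R_core.
by rewrite /alp /pos; case: (stn N (k + d)).
Qed.

End RSim.

Definition insA (N M : rmap) (aN : hs N -> hs N) (aM : hs M -> hs M)
  (x : option (hs N + hs M)) : option (hs N + hs M) :=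
  match x with
  | None => Some (inr (rt M))
  | Some (inl h) => Some (inl (aN h))
  | Some (inr m) => if m == rt M then None else Some (inr (aM m))
  end.

Section ISim.
Variables (M G : rmap) (l : nat).
Hypothesis Mr : rooted_map M.
Hypothesis Gr : rooted_map G.
Hypothesis lok : corner_ok G l.

Local Notation T := (hs G).
Local Notation s := (sg G).
Local Notation r := (rt G).
Local Notation rM := (rt M).
Local Notation c := (corner G l).
Local Notation IG := (Ins M l G).

Lemma connect_IN (bN : T -> T) (bM : hs M -> hs M) u v :
  connect (gen_rel (sg IG) (insA bN bM)) (Some (inl u)) (Some (inl v)) =
  connect (gen_rel s bN) u v.
Proof.
apply/idP/idP.
  pose f (x : hs IG) := match x with None => c | Some (inl u) => u | Some (inr _) => c end.
  move/(connect_hom (f := f)); apply => x y /orP[] /eqP ->.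
  - case: x => [[h|m]|] /=.
    + case: ifP => [/eqP->|_]; first exact: connect0.
      by apply: connect1; rewrite /gen_rel eqxx.
    + exact: connect0.
    + by apply: connect1; rewrite /gen_rel eqxx.
  - case: x => [[h|m]|] /=; try exact: connect0.
      by apply: connect1; rewrite /gen_rel eqxx orbT.
    by case: ifP => _; exact: connect0.
move/(connect_hom (f := fun u : T => (Some (inl u) : hs IG))); apply => x y /orP[] /eqP ->.
  have [xc|xc] := eqVneq x c.
    apply: (connect_trans (connect1 (_ : gen_rel (sg IG) (insA bN bM) _ None))).
      by rewrite /gen_rel /= xc eqxx.
    by apply: connect1; rewrite /gen_rel /= xc eqxx.
  by apply: connect1; rewrite /gen_rel /= (negbTE xc) eqxx.
by apply: connect1; rewrite /gen_rel /= eqxx orbT.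
Qed.

Lemma connect_IM (bN : T -> T) (bM : hs M -> hs M) u v : bM rM = rM ->
  connect (gen_rel (sg IG) (insA bN bM)) (Some (inr u)) (Some (inr v)) =
  connect (gen_rel (sg M) bM) u v.
Proof.
move=> bMr; apply/idP/idP.
  pose f (x : hs IG) := match x with None => rM | Some (inl _) => rM | Some (inr m) => m end.
  move/(connect_hom (f := f)); apply => x y /orP[] /eqP ->.
  - case: x => [[h|m]|] /=.
    + by case: ifP => _; exact: connect0.
    + by apply: connect1; rewrite /gen_rel eqxx.
    + exact: connect0.
  - case: x => [[h|m]|] /=; try exact: connect0.
    case: ifP => [/eqP->|_]; first exact: connect0.
    by apply: connect1; rewrite /gen_rel eqxx orbT.
move/(connect_hom (f := fun u : hs M => (Some (inr u) : hs IG))); apply => x y /orP[] /eqP ->.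
  by apply: connect1; rewrite /gen_rel /= eqxx.
have [xr|xr] := eqVneq x rM; first by rewrite xr bMr; apply: connect0.
by apply: connect1; rewrite /gen_rel /= (negbTE xr) eqxx orbT.
Qed.

Lemma cut_insN (aN : T -> T) (aM : hs M -> hs M) h :
  cut (insA aN aM) (Some (inl h)) = insA (cut aN h) aM.
Proof.
apply: functional_extensionality => -[[x|m]|] //=; rewrite /cut /=.
by case: ifP.
Qed.

Lemma cut_insM (aN : T -> T) (aM : hs M -> hs M) m' :
  involutive aM -> aM rM = rM -> m' != rM ->
  cut (insA aN aM) (Some (inr m')) = insA aN (cut aM m').
Proof.
move=> ainv ar mr.
have e1 : forall u v : hs M, (Some (inr u) == Some (inr v) :> hs IG) = (u == v) by [].
have amr : (rM == aM m') = false.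
  by apply/negbTE/eqP => E; move/eqP: mr; apply; rewrite -[m']ainv -E ar.
apply: functional_extensionality => -[[x|m]|] /=; rewrite /cut /= ?(negbTE mr) ?e1 //.
have [->|mrM] := eqVneq m rM.
  by rewrite eq_sym (negbTE mr) amr.
by case: ifP.
Qed.

Lemma I_coreN (aN : T -> T) (aM : hs M -> hs M) h' :
  stepcore (G:=IG) (insA aN aM) (Some (inl h')) =
  (insA (stepcore (G:=G) aN h').1 aM, Some (inl (stepcore (G:=G) aN h').2)).
Proof.
rewrite /stepcore /=.
have E1 : (Some (inl (aN h')) == Some (inl h') :> hs IG) = (aN h' == h') by [].
have E2 : is_bridge (G:=IG) (insA aN aM) (Some (inl h')) = is_bridge (G:=G) aN h'.
  by rewrite /is_bridge /= cut_insN connect_IN.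
rewrite E1 E2; case: ifP => _ //; by rewrite cut_insN.
Qed.

Lemma I_coreM (aN : T -> T) (aM : hs M -> hs M) m' :
  involutive aM -> aM rM = rM -> m' != rM ->
  stepcore (G:=IG) (insA aN aM) (Some (inr m')) =
  (insA aN (stepcore (G:=M) aM m').1, Some (inr (stepcore (G:=M) aM m').2)).
Proof.
move=> ainv ar mr; rewrite /stepcore /= (negbTE mr).
have E1 : (Some (inr (aM m')) == Some (inr m') :> hs IG) = (aM m' == m') by [].
have cr : cut aM m' rM = rM by apply: cut_fix.
have E2 : is_bridge (G:=IG) (insA aN aM) (Some (inr m')) = is_bridge (G:=M) aM m'.
  by rewrite /is_bridge /= (negbTE mr) (cut_insM _ ainv ar mr) connect_IM.
rewrite E1 E2; case: ifP => _; first by rewrite /= (negbTE mr).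
by rewrite (cut_insM _ ainv ar mr) /= (negbTE mr).
Qed.

Lemma I_enter (aN : T -> T) (aM : hs M -> hs M) :
  stepcore (G:=IG) (insA aN aM) None = (insA aN aM, Some (inr rM)).
Proof.
rewrite /stepcore /=.
suff -> : is_bridge (G:=IG) (insA aN aM) None by rewrite ?orbT.
rewrite /is_bridge /=; apply/negP => H.
have : (Some (inr rM) : hs IG) \in [pred z : hs IG | if z is Some (inr _) then false else true].
  apply: (connect_inv _ _ H) => //.
  move=> u w Pu /orP[] /eqP ->.
    by case: u Pu => [[h|m]|] //= _; case: ifP.
  case: u Pu => [[h|m]|] //= _; rewrite /cut /=; by case: ifP.
by [].
Qed.

Lemma I_exit (aN : T -> T) (aM : hs M -> hs M) :
  stepcore (G:=IG) (insA aN aM) (Some (inr rM)) = (insA aN aM, None).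
Proof.
rewrite /stepcore /= eqxx.
suff -> : is_bridge (G:=IG) (insA aN aM) (Some (inr rM)) by rewrite orbT /= eqxx.
rewrite /is_bridge /= eqxx /=; apply/negP => H.
have : (None : hs IG) \in [pred z : hs IG | if z is Some (inr _) then true else false].
  apply: (connect_inv _ _ H) => //.
  move=> u w Pu /orP[] /eqP ->.
    by case: u Pu => [[h|m]|].
  case: u Pu => [[h|m]|] //= _; rewrite /cut /=.
  have [->|mr] := eqVneq m rM; first by rewrite eqxx. by case: ifP.
by [].
Qed.


Let Ginj : injective s. Proof. by case: Gr. Qed.
Let Ginv : involutive (al G). Proof. by case: Gr. Qed.
Let Gal : al G r = r. Proof. by case: Gr. Qed.
Let Gconn : forall x y, connect (gen_rel s (al G)) x y. Proof. by case: Gr. Qed.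
Let Minj : injective (sg M). Proof. by case: Mr. Qed.
Let Minv : involutive (al M). Proof. by case: Mr. Qed.
Let Mal : al M rM = rM. Proof. by case: Mr. Qed.
Let Mconn : forall x y, connect (gen_rel (sg M) (al M)) x y. Proof. by case: Mr. Qed.

Let l0 : 0 < l. Proof. by case/andP: lok. Qed.
Let lT : l <= #|T|. Proof. by move: lok; rewrite corner_okE // => /andP[]. Qed.
Let cE : c = pos G l.-1. Proof. exact: corner_pos. Qed.
Let lT' : l.-1 < #|T|. Proof. by rewrite prednK. Qed.

Lemma Ins_alE : Ins_al (M:=M) (N:=G) = insA (al G) (al M).
Proof. by apply: functional_extensionality => -[[x|m]|]. Qed.

Lemma I_pre j : j <= l.-1 -> stn IG j = (insA (alp G j) (al M), Some (inl (pos G j))).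
Proof.
elim: j => [|j IH] Hj; first by rewrite /stn /= Ins_alE.
rewrite stnS /alp /pos IH ?(ltnW Hj) //=.
have pc : pos G j != c.
  rewrite cE; apply/eqP => /pos_inj; move=> /(_ Ginj Ginv Gal Gconn (ltn_trans Hj lT') lT') E.
  by rewrite E ltnn in Hj.
rewrite -/(pos G j) (negbTE pc) I_coreN.
by rewrite /alp /pos; case: (stn G j).
Qed.

Lemma I_l : stn IG l = (insA (alp G l.-1) (al M), Some (inr rM)).
Proof.
rewrite -[X in stn _ X](prednK l0) stnS /alp /pos I_pre //= -cE eqxx.
by rewrite I_enter.
Qed.

Lemma I_M i : i < #|hs M| -> stn IG (l + i) = (insA (alp G l.-1) (alp M i), Some (inr (pos M i))).
Proof.
elim: i => [|i IH] Hi; first by rewrite addn0 I_l.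
rewrite addnS stnS /alp /pos IH ?(ltnW Hi) //=.
have sr : sg M (pos M i) != rM.
  apply/eqP => E; have := pos_nr Minj Minv Mal Mconn (i:=i.+1) isT Hi.
  by rewrite posS E alp_r ?eqxx.
rewrite (I_coreM _ (alp_inv Minv i) (alp_r Mal i) sr).
by rewrite /alp /pos; case: (stn M i).
Qed.

Lemma cardM0 : 0 < #|hs M|.
Proof. by apply/card_gt0P; exists rM. Qed.

Lemma I_x : stn IG (l + #|hs M|) = (insA (alp G l.-1) (alp M #|hs M|.-1), None).
Proof.
rewrite -[X in stn _ (_ + X)](prednK cardM0) addnS stnS /alp /pos I_M ?prednK ?cardM0 //=.
have sr : sg M (pos M #|hs M|.-1) = rM.
  have := pos_card Minj Minv Mal Mconn; rewrite -[X in pos M X](prednK cardM0) posS.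
  by move=> E; rewrite -[sg M _](alp_inv Minv #|hs M|.-1.+1) E (alp_r Mal).
by rewrite sr I_exit.
Qed.

Lemma I_post d : l + d < #|T| ->
  stn IG (l + d + #|hs M|).+1 =
  (insA (alp G (l + d)) (alp M #|hs M|.-1), Some (inl (pos G (l + d)))).
Proof.
elim: d => [|d IH] Hd.
  rewrite addn0 stnS /alp /pos I_x /= I_coreN cE -[X in stn G X](prednK l0) stnS.  done.
have Hd' : l + d < #|T| by apply: ltn_trans Hd; rewrite addnS.
rewrite addnS addSn stnS /alp /pos IH //=.
have pc : pos G (l + d) != c.
  rewrite cE; apply/eqP => /pos_inj; move=> /(_ Ginj Ginv Gal Gconn Hd' lT') E.
  by move: (leq_addr d l); rewrite E -ltnS prednK // ltnn.
rewrite -/(pos G (l + d)) (negbTE pc) I_coreN.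
by rewrite /alp /pos; case: (stn G (l + d)).
Qed.

End ISim.

Lemma msize_closed (M : rmap) : closed_map M -> 2 * msize M = #|hs M|.+1.
Proof.
case=> [[Minj Minv Mal Mconn] Mcl].
set rM := rt M.
have ainj : injective (al M) := can_inj Minv.
have orb x : fconnect (al M) x =i pred2 x (al M x).
  move=> y; apply/idP/idP.
    move=> H; rewrite -(iter_findex H); elim: (findex _ _ _) => [|n IH] /=.
      by rewrite !inE eqxx.
    rewrite !inE in IH *; case/orP: IH => /eqP ->; first by rewrite eqxx orbT.
    by rewrite Minv eqxx.
  rewrite !inE => /orP[] /eqP ->; [exact: connect0 | exact: fconnect1].
have o1 : order (al M) rM = 1 by rewrite /order (eq_card (orb rM)) Mal card2 eqxx.
have o2 x : x != rM -> order (al M) x = 2.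
  move=> xr; rewrite /order (eq_card (orb x)) card2.
  case: eqP => // E; case/negP: xr; apply/eqP; apply: Mcl; by rewrite -E.
have cl : forall x, (al M x == rM) = (x == rM).
  move=> x; apply/eqP/eqP => [H|->]; last by [].
  by rewrite -(Minv x) H Mal.
have E1 : fcard (al M) (pred1 rM) * 1 = #|pred1 rM|.
  apply: fcard_order_set => //.
    by apply/subsetP => x; rewrite !inE => /eqP ->; rewrite o1.
  by move=> x y /eqP <-; rewrite !inE cl.
have E2 : fcard (al M) (predC1 rM) * 2 = #|predC1 rM|.
  apply: fcard_order_set => //.
    by apply/subsetP => x; rewrite !inE => xr; rewrite o2.
  by move=> x y /eqP <-; rewrite !inE cl.
rewrite muln1 card1 in E1; rewrite cardC1 in E2.
have T0 : 0 < #|hs M| by apply/card_gt0P; exists rM.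
rewrite /msize (n_compC (pred1 rM)).
have -> : n_comp (frel (al M)) [predC pred1 rM] = fcard (al M) (predC1 rM).
  by apply: eq_n_comp_r => x; rewrite !inE.
rewrite E1 mulnDr muln1 mulnC E2 add2n prednK //.
Qed.

Definition RMc (N : rmap) (c : hs N) : rmap :=
  @RMap (option (option (hs N))) (R_sg c) (@R_al N) (Some (Some (rt N))).
Definition InsC (M N : rmap) (c : hs N) : rmap :=
  @RMap (option (hs N + hs M)) (Ins_sg c) (@Ins_al M N) (Some (inl (rt N))).

Arguments RMc : clear implicits.
Arguments InsC : clear implicits.
Section IsoGen.
Variables (M N : rmap).
Local Notation r := (rt N).
Local Notation rM := (rt M).

Definition fI (x : option (option (option (hs N)) + hs M)) : option (option (option (hs N + hs M))) :=
  match x with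
  | None => Some (Some None)
  | Some (inl None) => None
  | Some (inl (Some None)) => Some None
  | Some (inl (Some (Some h))) => Some (Some (Some (inl h)))
  | Some (inr m) => Some (Some (Some (inr m)))
  end.

Definition gI (y : option (option (option (hs N + hs M)))) : option (option (option (hs N)) + hs M) :=
  match y with
  | None => Some (inl None)
  | Some None => Some (inl (Some None))
  | Some (Some None) => None
  | Some (Some (Some (inl h))) => Some (inl (Some (Some h)))
  | Some (Some (Some (inr m))) => Some (inr m)
  end.

Lemma iso_gen (c d : hs N) CL CR :
  [\/ [/\ CL = Some (Some d), CR = Some (inl c), d <> r & d <> c],
      [/\ CL = Some None, CR = Some (inl c) & d = c] |
   [\/ [/\ CL = None, CR = None, d = r & c = r],
      [/\ CL = None, CR = Some (inl c), d = r & c <> r] |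
      [/\ CL = Some (Some d), CR = None, d = c & c <> r]]] ->
  iso (InsC M (RMc N c) CL) (RMc (InsC M N d) CR).
Proof.
move=> cfg.
have c1 : cancel fI gI by move=> [[[[h|]|]|m]|].
have c2 : cancel gI fI by move=> [[[[h|m]|]|]|].
have bij : bijective fI := Bijective c1 c2.
exists fI; split => //.
- case: cfg => [[-> -> ? ?]|[-> -> ?]|[[-> -> ? ?]|[-> -> ? ?]|[-> -> ? ?]]] [[[[h|]|]|m]|] //=; do ?[case: eqP => //= ?; subst]; try congruence.
- move=> [[[[h|]|]|m]|] //=; case: eqP => //.
Qed.
End IsoGen.

Unset Implicit Arguments.
Theorem lemma3p5 (M N : rmap) (k l : nat) :
  closed_map M -> rooted_map N ->
  (k <= l - 2 ->
     corner_ok N k -> corner_ok (R_ k N) l ->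
     corner_ok N (l - 2) -> corner_ok (Ins M (l - 2) N) k ->
     iso (Ins M l (R_ k N)) (R_ k (Ins M (l - 2) N))) /\
  (1 <= l - 1 <= k ->
     corner_ok N k -> corner_ok (R_ k N) l ->
     corner_ok N (l - 1) -> corner_ok (Ins M (l - 1) N) (k + 2 * msize M) ->
     iso (Ins M l (R_ k N)) (R_ (k + 2 * msize M) (Ins M (l - 1) N))).
Proof.
move=> Mc Nr.
have Mr : rooted_map M by case: Mc.
have msz := msize_closed Mc.
have [Ninj Ninv Nal Nconn] := Nr.
have okE := corner_okE Ninj Ninv Nal Nconn.
have pinj := pos_inj Ninj Ninv Nal Nconn.
have pnr := pos_nr Ninj Ninv Nal Nconn.
split.
- move=> kl kok lokR lok' kokI.
  set l' := l - 2 in lok' kokI *.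
  have /andP[k0 kT] : 0 < k <= #|hs N| by rewrite -okE.
  have /andP[l'0 l'T] : 0 < l' <= #|hs N| by rewrite -okE.
  have kl2 : k + 2 <= l by lia.
  have lE : l = l'.+2 by rewrite /l'; lia.
  have CRE : corner (Ins M l' N) k = Some (inl (corner N k)).
    rewrite corner_pos // {1}/pos I_pre //= ?(corner_pos kok) //; rewrite /l'; lia.
  have CLE : corner (R_ k N) l = pos (R_ k N) l.-1 by apply: corner_pos.
  apply: (iso_gen (c:=corner N k) (d:=corner N l') (CL:=corner (R_ k N) l) (CR:=corner (Ins M l' N) k)).
  have [kl'|kl'] := eqVneq k l'.
    apply: Or32; split => //; last by rewrite kl'.
    by rewrite CLE lE /= -kl' /pos R_b.
  have kl'' : k < l' by move: kl'; rewrite /l'; lia.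
  apply: Or31; split => //.
  + rewrite CLE lE /= (corner_pos lok').
    have -> : l'.+1 = (k + (l'.-1 - k)).+2 by lia.
    rewrite /pos R_post //; first by congr (Some (Some (stn N _).2)); lia.
    lia.
  + rewrite (corner_pos lok'); apply/eqP; apply: pnr.
      lia.
    lia.
  + rewrite (corner_pos lok') (corner_pos kok) => /pinj.
    have H1 : l'.-1 < #|hs N| by lia.
    have H2 : k.-1 < #|hs N| by lia.
    move=> /(_ H1 H2) E; lia.
- move=> /andP[l1 lk] kok lokR lok' kokI.
  set l' := l - 1 in l1 lk lok' kokI *.
  set K := k + 2 * msize M in kokI *.
  have /andP[k0 kT] : 0 < k <= #|hs N| by rewrite -okE.
  have /andP[l'0 l'T] : 0 < l' <= #|hs N| by rewrite -okE.
  have lE : l = l'.+1 by rewrite /l'; lia.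
  have M0 : 0 < #|hs M| by apply/card_gt0P; exists (rt M).
  have KE : K.-1 = k + #|hs M| by rewrite /K; lia.
  have CLE : corner (R_ k N) l = pos (R_ k N) l' by rewrite corner_pos // lE.
  have CRE : corner (Ins M l' N) K = pos (Ins M l' N) (k + #|hs M|) by rewrite corner_pos // KE.
  have dE : corner N l' = pos N l'.-1 := corner_pos lok'.
  have cE : corner N k = pos N k.-1 := corner_pos kok.
  have CLv : corner (R_ k N) l = if l' == 1 then None else Some (Some (corner N l')).
    rewrite CLE; case: eqP => [->|l'1]; first by rewrite /pos R_st1.
    rewrite dE -[X in pos _ X](prednK l'0) /pos R_pre' //; lia.
  have CRv : corner (Ins M l' N) K = if k == l' then None else Some (inl (corner N k)).
    rewrite CRE; case: eqP => [->|kl']; first by rewrite /pos I_x.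
    have -> : k + #|hs M| = (l' + (k.-1 - l') + #|hs M|).+1 by lia.
    rewrite /pos I_post //; first by rewrite cE; congr (Some (inl (stn N _).2)); lia.
    lia.
  apply: (iso_gen (c:=corner N k) (d:=corner N l') (CL:=corner (R_ k N) l) (CR:=corner (Ins M l' N) K)).
  rewrite CLv CRv.
  have [l'1|l'1] := eqVneq l' 1.
    have dr : corner N l' = rt N by rewrite dE l'1.
    have e1 : (l' == 1) = true by rewrite l'1.
    rewrite ?e1.
    have [kl'|kl'] := eqVneq k l'.
      by apply: Or33; apply: Or31; split => //; rewrite kl'.
    rewrite ?(negbTE kl').
    apply: Or33; apply: Or32; split => //.
    rewrite cE; apply/eqP; apply: pnr; lia.
  rewrite ?(negbTE l'1).
  have [kl'|kl'] := eqVneq k l'.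
    rewrite ?kl' ?eqxx.
    apply: Or33; apply: Or33; split => //.
    rewrite dE; apply/eqP; apply: pnr; lia.
  rewrite ?(negbTE kl').
  apply: Or31; split => //.
    rewrite dE; apply/eqP; apply: pnr; lia.
  rewrite dE cE => /pinj.
  have H1 : l'.-1 < #|hs N| by lia.
  have H2 : k.-1 < #|hs N| by lia.
  move=> /(_ H1 H2) E; move/eqP: kl'; lia.
Qed.
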